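(* Let $A, C, D$ be binary random variables, with $A$ taking values $a,\overline{a}$, $C$ taking values $c,\overline{c}$, $D$ taking values $d,\overline{d}$, and let $Y$ be a real random variable with finite expectation. Suppose the joint distribution factorizes as \[ p(A,C,D,Y)=p(D)\,p(C\mid D)\,p(A\mid C)\,p(Y\mid A,C). \] Assume that $C$ and $D$ are dependent, and that every event $\{A=x, C=y, D=z\}$ has positive probability. If $E[Y\mid A,D]$ is monotone in $D$, then $RD_{obs}$ lies between $RD_{true}$ and $RD_{crude}$.
   Context: $RD_{true}=E[Y|a,c]p(c)+E[Y|a,\overline{c}]p(\overline{c})-E[Y|\overline{a},c]p(c)-E[Y|\overline{a},\overline{c}]p(\overline{c})$; $RD_{crude}=E[Y|a]-E[Y|\overline{a}]$; $RD_{obs}=E[Y|a,d]p(d)+E[Y|a,\overline{d}]p(\overline{d})-E[Y|\overline{a},d]p(d)-E[Y|\overline{a},\overline{d}]p(\overline{d})$. $E[Y\mid A,D]$ is nondecreasing in $D$ if $E[Y\mid a,d]\ge E[Y\mid a,\overline{d}]$ and $E[Y\mid \overline{a},d]\ge E[Y\mid \overline{a},\overline{d}]$; nonincreasing if both inequalities are reversed; monotone if it is either. *)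

(* Defs.v *)
From mathcomp Require Import all_boot all_order all_algebra.
From mathcomp Require Import all_classical all_reals all_analysis.
Set Implicit Arguments. Unset Strict Implicit. Unset Printing Implicit Defensive.
Import Order.TTheory GRing.Theory Num.Theory.
Local Open Scope classical_set_scope.
Local Open Scope ring_scope.

(* Binary random variables are encoded by the event where they take their
   "unbarred" value: A = a on the set [A], A = abar on its complement. *)
Definition ev {T : Type} (X : set T) (b : bool) : set T :=
  if b then X else ~` X.

Definition pr {d} {T : measurableType d} {R : realType}
  (P : probability T R) (S : set T) : R := fine (P S).

Definition condE {d} {T : measurableType d} {R : realType}
  (P : probability T R) (Y : T -> R) (S : set T) : R :=
  fine (\int[P]_(x in S) (Y x)%:E) / pr P S.

Definition RD_true {d} {T : measurableType d} {R : realType}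
  (P : probability T R) (A C : set T) (Y : T -> R) : R :=
  condE P Y (A `&` C) * pr P C + condE P Y (A `&` ~` C) * pr P (~` C)
  - condE P Y (~` A `&` C) * pr P C - condE P Y (~` A `&` ~` C) * pr P (~` C).

Definition RD_crude {d} {T : measurableType d} {R : realType}
  (P : probability T R) (A : set T) (Y : T -> R) : R :=
  condE P Y A - condE P Y (~` A).

Definition RD_obs {d} {T : measurableType d} {R : realType}
  (P : probability T R) (A D : set T) (Y : T -> R) : R :=
  condE P Y (A `&` D) * pr P D + condE P Y (A `&` ~` D) * pr P (~` D)
  - condE P Y (~` A `&` D) * pr P D - condE P Y (~` A `&` ~` D) * pr P (~` D).

Definition nondecr_in_D {d} {T : measurableType d} {R : realType}
  (P : probability T R) (A D : set T) (Y : T -> R) : Prop :=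
  condE P Y (A `&` D) >= condE P Y (A `&` ~` D) /\
  condE P Y (~` A `&` D) >= condE P Y (~` A `&` ~` D).

Definition nonincr_in_D {d} {T : measurableType d} {R : realType}
  (P : probability T R) (A D : set T) (Y : T -> R) : Prop :=
  condE P Y (A `&` D) <= condE P Y (A `&` ~` D) /\
  condE P Y (~` A `&` D) <= condE P Y (~` A `&` ~` D).

Definition monotone_in_D {d} {T : measurableType d} {R : realType}
  (P : probability T R) (A D : set T) (Y : T -> R) : Prop :=
  nondecr_in_D P A D Y \/ nonincr_in_D P A D Y.

(* Factorization p(A,C,D,Y) = p(D) p(C|D) p(A|C) p(Y|A,C), i.e.
   p(A | C, D) = p(A | C) and p(Y | A, C, D) = p(Y | A, C),
   written in cross-multiplied form (all conditioning events have positive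
   probability under the standing assumptions). *)
Definition factorizes {d} {T : measurableType d} {R : realType}
  (P : probability T R) (A C D : set T) (Y : T -> R) : Prop :=
  (forall x y z : bool,
     pr P (ev A x `&` ev C y `&` ev D z) * pr P (ev C y)
     = pr P (ev A x `&` ev C y) * pr P (ev C y `&` ev D z)) /\
  (forall (B : set R), measurable B -> forall x y z : bool,
     pr P (Y @^-1` B `&` ev A x `&` ev C y `&` ev D z) * pr P (ev A x `&` ev C y)
     = pr P (Y @^-1` B `&` ev A x `&` ev C y) * pr P (ev A x `&` ev C y `&` ev D z)).

Definition between {R : realType} (x y z : R) : Prop :=
  (x <= y <= z) \/ (z <= y <= x).

(* Main.v *)
Require Import Defs.
From mathcomp Require Import all_boot all_order all_algebra.
From mathcomp Require Import all_classical all_reals all_analysis.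
From mathcomp Require Import measurable_realfun.
From mathcomp Require Import ring lra.
Import Order.TTheory GRing.Theory Num.Theory.
Local Open Scope classical_set_scope.
Local Open Scope ring_scope.

Lemma prE {d} {T : measurableType d} {R : realType} (P : probability T R) S :
  measurable S -> (pr P S)%:E = P S.
Proof. by move=> mS; rewrite /pr fineK // fin_num_measure. Qed.

Lemma pr_ge0 {d} {T : measurableType d} {R : realType} (P : probability T R) S :
  0 <= pr P S.
Proof. by rewrite /pr fine_ge0. Qed.

Lemma pr_split {d} {T : measurableType d} {R : realType} (P : probability T R) S X :
  measurable S -> measurable X -> pr P S = pr P (S `&` X) + pr P (S `&` ~` X).
Proof.
move=> mS mX.
have mSX : measurable (S `&` X) by exact: measurableI.
have mSnX : measurable (S `&` ~` X) by apply: measurableI => //; exact: measurableC.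
apply: EFin_inj; rewrite EFinD !prE // -measureU //; last first.
  by rewrite setIACA setICr setI0.
by rewrite -setIUr setUv setIT.
Qed.

Definition mI {d} {T : measurableType d} {R : realType} (P : probability T R)
  (Y : T -> R) (S : set T) : R := fine (\int[P]_(x in S) (Y x)%:E).

Lemma int_fin {d} {T : measurableType d} {R : realType} (P : probability T R)
  (Y : T -> R) S : P.-integrable setT (EFin \o Y) -> measurable S ->
  (\int[P]_(x in S) (Y x)%:E)%E \is a fin_num.
Proof.
move=> iY mS; apply: integrable_fin_num => //.
exact: (integrableS measurableT mS (@subsetT _ S) iY).
Qed.

Lemma mI_split {d} {T : measurableType d} {R : realType} (P : probability T R)
  (Y : T -> R) S X : P.-integrable setT (EFin \o Y) -> measurable S -> measurable X ->
  mI P Y S = mI P Y (S `&` X) + mI P Y (S `&` ~` X).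
Proof.
move=> iY mS mX.
have mSX : measurable (S `&` X) by exact: measurableI.
have mSnX : measurable (S `&` ~` X) by apply: measurableI => //; exact: measurableC.
rewrite /mI -fineD; try exact: int_fin.
rewrite -integral_setU //; last 2 first.
  have /integrableP[+ _] := iY. by apply: measurable_funS.
  by apply/disj_set2P; rewrite setIACA setICr setI0.
have -> : S `&` X `|` S `&` ~` X = S by rewrite -setIUr setUv setIT.
by [].
Qed.

Lemma restr_int {d} {T : measurableType d} {R : realType} (P : probability T R)
  (S : set T) (mS : measurable S) (f : T -> \bar R) : measurable_fun [set: T] f ->
  (\int[mrestr P mS]_(x in setT) f x = \int[P]_(x in S) f x)%E.
Proof.
move=> mf.
have mCS : measurable (~` S) by exact: measurableC.
rewrite -(setUv S) integral_setU //; last 2 first.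
  by rewrite setUv.
  by apply/disj_set2P; rewrite setICr.
rewrite (eq_measure_integral P); last first.
  by move=> B mB BS; change (P (B `&` S) = P B); rewrite setIidl.
rewrite [X in (_ + X)%E](eq_measure_integral mzero); last first.
  move=> B mB BS; change (P (B `&` S) = 0%E).
  have -> : B `&` S = set0.
    by apply/seteqP; split => // x [/BS]. 
  by rewrite measure0.
by rewrite integral_measure_zero adde0.
Qed.

Lemma transfer_ge0 {d} {T : measurableType d} {R : realType} (P : probability T R)
  (Y : T -> R) (mY : measurable_fun setT Y) S1 S2 (mS1 : measurable S1) (mS2 : measurable S2)
  (c1 c2 : {nonneg R}) (h : R -> \bar R) :
  measurable_fun setT h -> (forall r, (0 <= h r)%E) ->
  (forall B, measurable B -> c1%:num * pr P (Y @^-1` B `&` S1) = c2%:num * pr P (Y @^-1` B `&` S2)) ->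
  (c1%:num%:E * \int[P]_(x in S1) h (Y x) = c2%:num%:E * \int[P]_(x in S2) h (Y x))%E.
Proof.
move=> mh h0 H.
have mhY : measurable_fun setT (h \o Y) by exact: measurableT_comp.
have keyL (S : set T) (mS : measurable S) (c : {nonneg R}) :
  (c%:num%:E * \int[P]_(x in S) h (Y x) =
   \int[pushforward (mscale c (mrestr P mS)) Y]_(y in setT) h y)%E.
  rewrite (ge0_integral_pushforward mY) //.
  rewrite preimage_setT ge0_integral_mscale //.
  rewrite restr_int //. by move=> x _; exact: h0.
rewrite (keyL _ mS1) (keyL _ mS2).
apply: eq_measure_integral => B mB _.

have mYB : measurable (Y @^-1` B) by rewrite -[_ @^-1` _]setTI; exact: mY.
change (c1%:num%:E * P (Y @^-1` B `&` S1) = c2%:num%:E * P (Y @^-1` B `&` S2))%E.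
rewrite -!prE; try exact: measurableI.
by rewrite -!EFinM H.
Qed.

Lemma transfer {d} {T : measurableType d} {R : realType} (P : probability T R)
  (Y : T -> R) (mY : measurable_fun setT Y) (iY : P.-integrable setT (EFin \o Y))
  S1 S2 (mS1 : measurable S1) (mS2 : measurable S2) (c1 c2 : R) :
  0 <= c1 -> 0 <= c2 ->
  (forall B, measurable B -> c1 * pr P (Y @^-1` B `&` S1) = c2 * pr P (Y @^-1` B `&` S2)) ->
  c1 * mI P Y S1 = c2 * mI P Y S2.
Proof.
move=> c10 c20 H.
pose n1 := NngNum c10. pose n2 := NngNum c20.
have mE : measurable_fun [set: R] (@EFin R) by exact: EFin_measurable.
have iS S : measurable S -> P.-integrable S (EFin \o Y).
  by move=> mS; exact: (integrableS measurableT mS (@subsetT _ S) iY).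
have fp S : measurable S -> (\int[P]_(x in S) (@EFin R)^\+ (Y x))%E \is a fin_num.
  move=> mS; apply: integrable_fin_num => //.
  have := integrable_funepos mS (iS S mS). rewrite funepos_comp. exact.
have fn S : measurable S -> (\int[P]_(x in S) (@EFin R)^\- (Y x))%E \is a fin_num.
  move=> mS; apply: integrable_fin_num => //.
  have := integrable_funeneg mS (iS S mS). rewrite funeneg_comp. exact.
have spl S : measurable S -> mI P Y S =
   fine (\int[P]_(x in S) (@EFin R)^\+ (Y x))%E - fine (\int[P]_(x in S) (@EFin R)^\- (Y x))%E.
  move=> mS; rewrite /mI integralE.
  have -> : (fun x => (Y x)%:E)^\+%E = (@EFin R)^\+%E \o Y by exact: funepos_comp.
  have -> : (fun x => (Y x)%:E)^\-%E = (@EFin R)^\-%E \o Y by exact: funeneg_comp.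
  rewrite fineB //; [exact: fp | exact: fn].
have HH := @transfer_ge0 _ _ _ P Y mY S1 S2 mS1 mS2 n1 n2 (funepos (@EFin R)).
have Ep := HH (measurable_funepos mE) (fun r => funepos_ge0 _ _) H.
clear HH.
have HH := @transfer_ge0 _ _ _ P Y mY S1 S2 mS1 mS2 n1 n2 (funeneg (@EFin R)).
have En := HH (measurable_funeneg mE) (fun r => funeneg_ge0 _ _) H.
rewrite -(fineK (fp _ mS1)) -(fineK (fp _ mS2)) -!EFinM in Ep.
rewrite -(fineK (fn _ mS1)) -(fineK (fn _ mS2)) -!EFinM in En.
have Ep1 := EFin_inj Ep. have En1 := EFin_inj En.
by rewrite (spl _ mS1) (spl _ mS2) !mulrBr /= Ep1 En1.
Qed.
Definition sAC {R : realType} (p : bool -> bool -> bool -> R) (x y : bool) := p x y true + p x y false.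
Definition sAD {R : realType} (p : bool -> bool -> bool -> R) (x z : bool) := p x true z + p x false z.
Definition sA {R : realType} (p : bool -> bool -> bool -> R) (x : bool) := sAC p x true + sAC p x false.
Definition sC {R : realType} (p : bool -> bool -> bool -> R) (y : bool) := sAC p true y + sAC p false y.
Definition sD {R : realType} (p : bool -> bool -> bool -> R) (z : bool) := sAD p true z + sAD p false z.
Definition mAC {R : realType} (p : bool -> bool -> bool -> R) (mu : bool -> bool -> R) (x y : bool) := mu x y * p x y true + mu x y * p x y false.
Definition mAD {R : realType} (p : bool -> bool -> bool -> R) (mu : bool -> bool -> R) (x z : bool) := mu x true * p x true z + mu x false * p x false z.
Definition mAt {R : realType} (p : bool -> bool -> bool -> R) (mu : bool -> bool -> R) (x : bool) := mAC p mu x true + mAC p mu x false.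

Definition RDt {R : realType} (p : bool -> bool -> bool -> R) (mu : bool -> bool -> R) :=
  mAC p mu true true / sAC p true true * sC p true
  + mAC p mu true false / sAC p true false * sC p false
  - mAC p mu false true / sAC p false true * sC p true
  - mAC p mu false false / sAC p false false * sC p false.
Definition RDo {R : realType} (p : bool -> bool -> bool -> R) (mu : bool -> bool -> R) :=
  mAD p mu true true / sAD p true true * sD p true
  + mAD p mu true false / sAD p true false * sD p false
  - mAD p mu false true / sAD p false true * sD p true
  - mAD p mu false false / sAD p false false * sD p false.
Definition RDc {R : realType} (p : bool -> bool -> bool -> R) (mu : bool -> bool -> R) := mAt p mu true / sA p true - mAt p mu false / sA p false.
Definition monoA {R : realType} (p : bool -> bool -> bool -> R) (mu : bool -> bool -> R) :=
  (mAD p mu true true / sAD p true true >= mAD p mu true false / sAD p true false /\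
   mAD p mu false true / sAD p false true >= mAD p mu false false / sAD p false false) \/
  (mAD p mu true true / sAD p true true <= mAD p mu true false / sAD p true false /\
   mAD p mu false true / sAD p false true <= mAD p mu false false / sAD p false false).

Lemma between_of {R : realType} (x y z : R) : 0 <= (y - x) * (z - y) -> between x y z.
Proof.
move=> h; rewrite /between.
have [xy|yx] := lerP x y; have [yz|zy] := lerP y z.
- by left; apply/andP.
- right; apply/andP; split; first exact: ltW.
  case: (lerP y x) => // xy'; exfalso.
  have : (y - x) * (z - y) < 0 by nra.
  by rewrite ltNge h.
- right; apply/andP; split; last exact: ltW.
  case: (lerP z y) => // zy'; exfalso.
  have : (y - x) * (z - y) < 0 by nra.
  by rewrite ltNge h.
- by right; apply/andP; split; exact: ltW.
Qed.

Definition mkp {R : realType} (q : bool -> R) (r : bool -> bool -> R) : bool -> bool -> bool -> R :=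
  fun x y z => if x then q y * r y z else (1 - q y) * r y z.

Ltac posi := apply: lt0r_neq0; nra.

Lemma core {R : realType} (q : bool -> R) (r mu : bool -> bool -> R) :
  (forall y, 0 < q y) -> (forall y, q y < 1) -> (forall y z, 0 < r y z) ->
  r true true + r true false + r false true + r false false = 1 ->
  r true true * r false false - r true false * r false true != 0 ->
  monoA (mkp q r) mu ->
  between (RDt (mkp q r) mu) (RDo (mkp q r) mu) (RDc (mkp q r) mu).
Proof.
move=> hq0 hq1 hr tot Dd0.
rewrite /monoA /RDt /RDo /RDc /mAt /mAC /mAD /sA /sC /sD /sAC /sAD /mkp /=.
have q1p := hq0 true. have q0p := hq0 false. have q1l := hq1 true. have q0l := hq1 false.
have r11p := hr true true. have r10p := hr true false.
have r01p := hr false true. have r00p := hr false false.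
move: tot Dd0 q1p q0p q1l q0l r11p r10p r01p r00p.
set q1 := q true; set q0 := q false.
set r11 := r true true; set r10 := r true false; set r01 := r false true; set r00 := r false false.
set a1 := mu true true; set a0 := mu true false; set b1 := mu false true; set b0 := mu false false.
move=> tot Dd0 q1p q0p q1l q0l r11p r10p r01p r00p.
set da1 := q1 * r11 + q0 * r01. set da0 := q1 * r10 + q0 * r00.
set db1 := (1 - q1) * r11 + (1 - q0) * r01. set db0 := (1 - q1) * r10 + (1 - q0) * r00.
have da1p : 0 < da1 by rewrite /da1; nra.
have da0p : 0 < da0 by rewrite /da0; nra.
have db1p : 0 < db1 by rewrite /db1; nra.
have db0p : 0 < db0 by rewrite /db0; nra.
set Pa := q1 * r11 + q1 * r10 + (q0 * r01 + q0 * r00).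
set Pb := (1 - q1) * r11 + (1 - q1) * r10 + ((1 - q0) * r01 + (1 - q0) * r00).
have Pap : 0 < Pa by rewrite /Pa; nra.
have Pbp : 0 < Pb by rewrite /Pb; nra.
set Da := a1 - a0. set Db := b1 - b0. set Dd := r11 * r00 - r10 * r01.
set ET := a1 * (r11 + r10) + a0 * (r01 + r00) - b1 * (r11 + r10) - b0 * (r01 + r00).
set EO := (a1 * (q1 * r11) + a0 * (q0 * r01)) / da1 * (r11 + r01)
  + (a1 * (q1 * r10) + a0 * (q0 * r00)) / da0 * (r10 + r00)
  - (b1 * ((1 - q1) * r11) + b0 * ((1 - q0) * r01)) / db1 * (r11 + r01)
  - (b1 * ((1 - q1) * r10) + b0 * ((1 - q0) * r00)) / db0 * (r10 + r00).
set EC := (a1 * (q1 * r11) + a1 * (q1 * r10) + (a0 * (q0 * r01) + a0 * (q0 * r00))) / Pa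
  - (b1 * ((1 - q1) * r11) + b1 * ((1 - q1) * r10) +
      (b0 * ((1 - q0) * r01) + b0 * ((1 - q0) * r00))) / Pb.
set Ka := r11 * r01 / da1 + r10 * r00 / da0.
set Kb := r11 * r01 / db1 + r10 * r00 / db0.
set La := q1 * q0 / (Pa * da1 * da0).
set Lb := (1 - q1) * (1 - q0) / (Pb * db1 * db0).
have Kap : 0 < Ka by rewrite /Ka; apply: addr_gt0; apply: divr_gt0 => //; apply: mulr_gt0.
have Kbp : 0 < Kb by rewrite /Kb; apply: addr_gt0; apply: divr_gt0 => //; apply: mulr_gt0.
have Lap : 0 < La by rewrite /La; apply: divr_gt0; rewrite ?mulr_gt0.
have Lbp : 0 < Lb by rewrite /Lb; apply: divr_gt0; rewrite ?mulr_gt0 // subr_gt0.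
have r00E : r00 = 1 - r11 - r10 - r01 by lra.
have hOT : EO - ET = (q1 - q0) * (Ka * Da + Kb * Db).
  rewrite /EO /ET /Ka /Kb /Da /Db /da1 /da0 /db1 /db0.
  move: da0p db0p; rewrite /da0 /db0 r00E => da0p' db0p'.
  field; do ![apply/andP; split]; try posi.
have hCO : EC - EO = (q1 - q0) * Dd ^+ 2 * (La * Da + Lb * Db).
  rewrite /EO /EC /La /Lb /Da /Db /Dd /Pa /Pb /da1 /da0 /db1 /db0.
  move: da0p db0p Pap Pbp; rewrite /da0 /db0 /Pa /Pb r00E => da0p' db0p' Pap' Pbp'.
  field; do ![apply/andP; split]; try posi.
have ha : (a1 * (q1 * r11) + a0 * (q0 * r01)) / da1 - (a1 * (q1 * r10) + a0 * (q0 * r00)) / da0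
    = q1 * q0 / (da1 * da0) * (Dd * Da).
  rewrite /Dd /Da /da1 /da0; field; do ![apply/andP; split]; try posi.
have hb : (b1 * ((1 - q1) * r11) + b0 * ((1 - q0) * r01)) / db1
    - (b1 * ((1 - q1) * r10) + b0 * ((1 - q0) * r00)) / db0
    = (1 - q1) * (1 - q0) / (db1 * db0) * (Dd * Db).
  rewrite /Dd /Db /db1 /db0; field; do ![apply/andP; split]; try posi.
have ca : 0 < q1 * q0 / (da1 * da0) by apply: divr_gt0; apply: mulr_gt0.
have cb : 0 < (1 - q1) * (1 - q0) / (db1 * db0).
  by apply: divr_gt0; apply: mulr_gt0; rewrite // subr_gt0.
move=> mono.
have uv : (0 <= Dd * Da /\ 0 <= Dd * Db) \/ (Dd * Da <= 0 /\ Dd * Db <= 0).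
  case: mono => [[m1 m2]|[m1 m2]]; [left|right]; split.
  - by rewrite -(pmulr_rge0 _ ca) -ha subr_ge0.
  - by rewrite -(pmulr_rge0 _ cb) -hb subr_ge0.
  - by rewrite -(pmulr_rle0 _ ca) -ha subr_le0.
  - by rewrite -(pmulr_rle0 _ cb) -hb subr_le0.
have eT : (a1 * (q1 * r11) + a1 * (q1 * r10)) / (q1 * r11 + q1 * r10) *
     (q1 * r11 + q1 * r10 + ((1 - q1) * r11 + (1 - q1) * r10)) +
     (a0 * (q0 * r01) + a0 * (q0 * r00)) / (q0 * r01 + q0 * r00) *
     (q0 * r01 + q0 * r00 + ((1 - q0) * r01 + (1 - q0) * r00)) -
     (b1 * ((1 - q1) * r11) + b1 * ((1 - q1) * r10)) /
     ((1 - q1) * r11 + (1 - q1) * r10) *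
     (q1 * r11 + q1 * r10 + ((1 - q1) * r11 + (1 - q1) * r10)) -
     (b0 * ((1 - q0) * r01) + b0 * ((1 - q0) * r00)) /
     ((1 - q0) * r01 + (1 - q0) * r00) *
     (q0 * r01 + q0 * r00 + ((1 - q0) * r01 + (1 - q0) * r00)) = ET.
  rewrite /ET; field; do ![apply/andP; split]; try posi.
have eO : (a1 * (q1 * r11) + a0 * (q0 * r01)) / da1 * (da1 + db1) +
     (a1 * (q1 * r10) + a0 * (q0 * r00)) / da0 * (da0 + db0) -
     (b1 * ((1 - q1) * r11) + b0 * ((1 - q0) * r01)) / db1 * (da1 + db1) -
     (b1 * ((1 - q1) * r10) + b0 * ((1 - q0) * r00)) / db0 * (da0 + db0) = EO.
  by rewrite /EO /da1 /db1 /da0 /db0; congr (_ + _ - _ - _); congr (_ * _); ring.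
rewrite eT eO; apply: between_of.
have -> : (EO - ET) * (EC - EO) =
    (q1 - q0) ^+ 2 * ((Ka * (Dd * Da) + Kb * (Dd * Db)) * (La * (Dd * Da) + Lb * (Dd * Db))).
  by rewrite hOT hCO; ring.
apply: mulr_ge0; first exact: sqr_ge0.
case: uv => [[u0 v0]|[u0 v0]].
  by apply: mulr_ge0; apply: addr_ge0; apply: mulr_ge0 => //; apply: ltW.
apply: mulr_le0; rewrite -oppr_ge0 opprD; apply: addr_ge0;
  rewrite -mulrN; apply: mulr_ge0; rewrite ?oppr_ge0 //; apply: ltW => //.
Qed.


Lemma bridge {R : realType} (p : bool -> bool -> bool -> R) (mu : bool -> bool -> R) :
  (forall x y z, 0 < p x y z) ->
  (forall x y z, p x y z * sC p y = sAC p x y * (p true y z + p false y z)) ->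
  sA p true + sA p false = 1 ->
  p true true true + p false true true != sC p true * sD p true ->
  monoA p mu -> between (RDt p mu) (RDo p mu) (RDc p mu).
Proof.
move=> pos F1 tot dep mono.
pose q y := sAC p true y / sC p y.
pose r y z := p true y z + p false y z.
have sCp y : 0 < sC p y by rewrite /sC /sAC; apply: addr_gt0; apply: addr_gt0.
have hp : p = mkp q r.
  apply/funext => x; apply/funext => y; apply/funext => z.
  have e1 : p true y z = q y * r y z.
    by rewrite /q /r mulrAC -F1 mulfK // lt0r_neq0.
  case: x; rewrite /mkp //.
  by rewrite mulrBl mul1r -e1 /r addrC addKr.
have Dd : r true true * r false false - r true false * r false true =
   (p true true true + p false true true) - sC p true * sD p true.
  rewrite -[X in _ = X - _]mulr1 -tot /r /sA /sC /sD /sAC /sAD; ring.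
have tot' : r true true + r true false + r false true + r false false = 1.
  by rewrite -tot /r /sA /sAC; ring.
rewrite hp in mono *; apply: core => //.
- by move=> y; rewrite /q; apply: divr_gt0 => //; rewrite /sAC; apply: addr_gt0.
- move=> y; rewrite /q ltr_pdivrMr // mul1r /sC ltrDl /sAC; apply: addr_gt0 => //.
- by move=> y z; rewrite /r; apply: addr_gt0.
- by rewrite Dd subr_eq0.
Qed.


Theorem corollary2 (d : measure_display) (T : measurableType d) (R : realType)
  (P : probability T R) (A C D : set T) (Y : T -> R)
  (mA : measurable A) (mC : measurable C) (mD : measurable D)
  (mY : measurable_fun setT Y)
  (iY : P.-integrable setT (EFin \o Y))
  (fact : factorizes P A C D Y)
  (dep : pr P (C `&` D) <> pr P C * pr P D)
  (pos : forall x y z : bool, 0 < pr P (ev A x `&` ev C y `&` ev D z))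
  (mono : monotone_in_D P A D Y) :
  between (RD_true P A C Y) (RD_obs P A D Y) (RD_crude P A Y).
Proof.
have mev (X : set T) b : measurable X -> measurable (ev X b).
  by case: b => //= mX; exact: measurableC.
pose p x y z := pr P (ev A x `&` ev C y `&` ev D z).
pose m x y z := mI P Y (ev A x `&` ev C y `&` ev D z).
have msAC x y : measurable (ev A x `&` ev C y) by apply: measurableI; exact: mev.
have msAD x z : measurable (ev A x `&` ev D z) by apply: measurableI; exact: mev.
have msCD y z : measurable (ev C y `&` ev D z) by apply: measurableI; exact: mev.
have mat x y z : measurable (ev A x `&` ev C y `&` ev D z).
  by apply: measurableI; [exact: msAC | exact: mev].
have PAC x y : pr P (ev A x `&` ev C y) = sAC p x y.
  by rewrite (pr_split _ _ _ (msAC x y) mD).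
have MAC x y : mI P Y (ev A x `&` ev C y) = m x y true + m x y false.
  by rewrite (mI_split _ _ _ _ iY (msAC x y) mD).
have PAD x z : pr P (ev A x `&` ev D z) = sAD p x z.
  by rewrite (pr_split _ _ _ (msAD x z) mC) (setIAC _ (ev D z) C) (setIAC _ (ev D z) (~` C)).
have MAD x z : mI P Y (ev A x `&` ev D z) = m x true z + m x false z.
  by rewrite (mI_split _ _ _ _ iY (msAD x z) mC) (setIAC _ (ev D z) C) (setIAC _ (ev D z) (~` C)).
have PA x : pr P (ev A x) = sA p x.
  rewrite (pr_split _ _ _ (mev _ x mA) mC).
  by rewrite (PAC x true) (PAC x false).
have MA x : mI P Y (ev A x) = (m x true true + m x true false) + (m x false true + m x false false).
  rewrite (mI_split _ _ _ _ iY (mev _ x mA) mC).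
  by rewrite (MAC x true) (MAC x false).
have PC y : pr P (ev C y) = sC p y.
  rewrite (pr_split _ _ _ (mev _ y mC) mA) setIC (setIC _ (~` A)).
  by rewrite (PAC true y) (PAC false y).
have PD z : pr P (ev D z) = sD p z.
  rewrite (pr_split _ _ _ (mev _ z mD) mA) setIC (setIC _ (~` A)).
  by rewrite (PAD true z) (PAD false z).
have PCD y z : pr P (ev C y `&` ev D z) = p true y z + p false y z.
  rewrite (pr_split _ _ _ (msCD y z) mA) setIC (setIC _ (~` A)) !setIA.
  by [].
have tot : sA p true + sA p false = 1.
  have h1 : pr P setT = 1 by rewrite /pr probability_setT.
  move: h1; rewrite (pr_split _ _ _ measurableT mA) !setTI.
  by rewrite (PA true) (PA false).
have F1 x y z : p x y z * sC p y = sAC p x y * (p true y z + p false y z).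
  by have := fact.1 x y z; rewrite (PC y) (PAC x y) (PCD y z).
have F2 x y z : m x y z * sAC p x y = (m x y true + m x y false) * p x y z.
  rewrite -(PAC x y) -(MAC x y) mulrC [RHS]mulrC.
  apply: (transfer P Y mY iY _ _ (mat x y z) (msAC x y) _ _ (pr_ge0 P (ev A x `&` ev C y)) (pr_ge0 P (ev A x `&` ev C y `&` ev D z))).
  move=> B mB; rewrite !setIA mulrC [RHS]mulrC; exact: (proj2 fact B mB x y z).
have sACp x y : 0 < sAC p x y by rewrite /sAC; apply: addr_gt0; exact: pos.
pose mu x y := (m x y true + m x y false) / sAC p x y.
have hm x y z : m x y z = mu x y * p x y z.
  by rewrite /mu mulrAC -F2 mulfK // lt0r_neq0.
have MAC' x y : mI P Y (ev A x `&` ev C y) = mAC p mu x y.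
  by rewrite MAC /mAC !hm.
have MAD' x z : mI P Y (ev A x `&` ev D z) = mAD p mu x z.
  by rewrite MAD /mAD !hm.
have MA' x : mI P Y (ev A x) = mAt p mu x.
  by rewrite MA /mAt /mAC !hm.
have cE S : condE P Y S = mI P Y S / pr P S by [].
have eT : RD_true P A C Y = RDt p mu.
  rewrite /RD_true /RDt !cE.
  rewrite (MAC' true true) (MAC' true false) (MAC' false true) (MAC' false false).
  rewrite (PAC true true) (PAC true false) (PAC false true) (PAC false false).
  by rewrite (PC true) (PC false).
have eO : RD_obs P A D Y = RDo p mu.
  rewrite /RD_obs /RDo !cE.
  rewrite (MAD' true true) (MAD' true false) (MAD' false true) (MAD' false false).
  rewrite (PAD true true) (PAD true false) (PAD false true) (PAD false false).
  by rewrite (PD true) (PD false).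
have eC : RD_crude P A Y = RDc p mu.
  rewrite /RD_crude /RDc !cE.
  by rewrite (MA' true) (MA' false) (PA true) (PA false).
rewrite eT eO eC; apply: bridge => //.
- apply/eqP; move: dep.
  rewrite -(PC true) -(PD true).
  have -> : p true true true + p false true true = pr P (C `&` D) by rewrite (PCD true true).
  by [].
- move: mono; rewrite /monotone_in_D /nondecr_in_D /nonincr_in_D /monoA !cE.
  rewrite (MAD' true true) (MAD' true false) (MAD' false true) (MAD' false false).
  by rewrite (PAD true true) (PAD true false) (PAD false true) (PAD false false).
Qed.
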